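(* Let $n\ge2$, $\mathbf p^0\in\Delta_n$, $\mathbf p^{t+1}=F(\mathbf p^t)$. Then the sequence $L^t=\sum_{k=1}^n(p^t_k)^2$, $t=0,1,\dots$, is (non-strictly) decreasing: $L^{t+1}\le L^t$ for all $t$.
   Context: $\Delta_n=\{\mathbf p\in\mathbb R^n: p_i\ge 0,\ \sum_i p_i=1\}$. For $\mathbf p\in\Delta_n$, $L(\mathbf p)=\sum_{k}p_k^2$ and $F(\mathbf p)_i=p_i\frac{n-p_i}{n-L(\mathbf p)}$. *)

(* Defs.v *)
From mathcomp Require Import all_boot all_order all_algebra.
Set Implicit Arguments. Unset Strict Implicit. Unset Printing Implicit Defensive.
Import Order.TTheory GRing.Theory Num.Theory.
Local Open Scope ring_scope.

Definition simplex (R : realFieldType) (n : nat) (p : 'I_n -> R) : Prop :=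
  (forall i, 0 <= p i) /\ \sum_(i < n) p i = 1.

Definition Lsq (R : realFieldType) (n : nat) (p : 'I_n -> R) : R :=
  \sum_(k < n) p k ^+ 2.

Definition Fmap (R : realFieldType) (n : nat) (p : 'I_n -> R) : 'I_n -> R :=
  fun i => p i * (n%:R - p i) / (n%:R - Lsq p).

Definition traj (R : realFieldType) (n : nat) (p0 : 'I_n -> R) (t : nat) : 'I_n -> R :=
  iter t (@Fmap R n) p0.

(* Main.v *)
Require Import Defs.
From mathcomp Require Import all_boot all_order all_algebra.
From mathcomp Require Import ring lra.
Import Order.TTheory GRing.Theory Num.Theory.
Local Open Scope ring_scope.

Section Aux.
Variable (R : realFieldType) (n : nat).

Lemma simplex_le1 (p : 'I_n -> R) : simplex p -> forall i, p i <= 1.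
Proof.
move=> [h0 h1] i; rewrite -h1 (bigD1 i) //= lerDl.
by apply: sumr_ge0 => j _; apply: h0.
Qed.

Arguments simplex_le1 {p}.
Lemma simplex_L (p : 'I_n -> R) : simplex p -> 0 <= Lsq p <= 1.
Proof.
move=> hs; have [h0 h1] := hs; apply/andP; split.
  by apply: sumr_ge0 => j _; rewrite exprn_ge0.
rewrite -h1; apply: ler_sum => j _.
have := h0 j; have := simplex_le1 hs j; rewrite expr2; nra.
Qed.

Arguments simplex_L {p}.
Lemma Fmap_ok (p : 'I_n -> R) : (2 <= n)%N -> simplex p ->
  simplex (Fmap p) /\ Lsq (Fmap p) <= Lsq p.
Proof.
move=> n2 hs; have [h0 h1] := hs.
have /andP [L0 L1] := simplex_L hs.
have le1 := simplex_le1 hs.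
have n2R : 2 <= n%:R :> R by rewrite (ler_nat R 2 n).
set L := Lsq p in L0 L1 *.
have Dpos : 0 < n%:R - L by lra.
split; first split.
- move=> i; rewrite /Fmap; apply: divr_ge0; last by rewrite -/L; lra.
  apply: mulr_ge0; [exact: h0 | have := le1 i; lra].
- rewrite /Fmap -/L -mulr_suml.
  have -> : \sum_(i < n) p i * (n%:R - p i) = n%:R - L.
    transitivity (\sum_(i < n) (p i * n%:R) - \sum_(i < n) p i ^+ 2).
      by rewrite -sumrB; apply: eq_bigr => i _; rewrite mulrBr expr2.
    by rewrite -mulr_suml h1 mul1r.
  by rewrite divff // gt_eqF.
- rewrite /Lsq /Fmap -/L.
  under eq_bigr => i _ do rewrite expr_div_n.
  rewrite -mulr_suml ler_pdivrMr; last by rewrite exprn_gt0.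
  have key : forall i, (p i * (n%:R - p i)) ^+ 2
      = ((n%:R ^+ 2 - 4 * n%:R * L + 3 * L ^+ 2) * p i ^+ 2 + 2 * L ^+ 2 * (n%:R - L) * p i)
        - p i * (p i - L) ^+ 2 * (2 * n%:R - p i - 2 * L).
    by move=> i; ring.
  under eq_bigr => i _ do rewrite key.
  rewrite sumrB big_split /= -!mulr_sumr h1 -/L mulr1.
  have hs2 : 0 <= \sum_(i < n) p i * (p i - L) ^+ 2 * (2 * n%:R - p i - 2 * L).
    apply: sumr_ge0 => i _; apply: mulr_ge0; first apply: mulr_ge0 => //.
      exact: sqr_ge0.
    have := le1 i; lra.
  have -> : (n%:R ^+ 2 - 4 * n%:R * L + 3 * L ^+ 2) * L + 2 * L ^+ 2 * (n%:R - L)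
          = L * (n%:R - L) ^+ 2 by ring.
  lra.
Qed.
End Aux.

Theorem lemma1 (R : realFieldType) (n : nat) (p0 : 'I_n -> R) :
  (2 <= n)%N -> simplex p0 ->
  forall t : nat, Lsq (traj p0 t.+1) <= Lsq (traj p0 t).
Proof.
move=> n2 hs.
have hsT : forall t, simplex (traj p0 t).
  elim=> [|t IH] //; rewrite /traj iterS; exact: (proj1 (Fmap_ok _ _ _ n2 IH)).
move=> t; rewrite /traj iterS; exact: (proj2 (Fmap_ok _ _ _ n2 (hsT t))).
Qed.
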